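(* Let $G$ be a 3-connected graph. If $G$ is 3-colourable, then the $G_3^0$-blocked graph of $G$ is the overlap graph of a family of subtrees of a tree with exactly 3 leaves.
   Context: Two sets $a,b$ overlap if $a\cap b\neq\emptyset$, $a\setminus b\neq\emptyset$, $b\setminus a\neq\emptyset$; the overlap graph of a family of subtrees (nonempty connected node sets) of a tree has one vertex per subtree, two being adjacent iff their subtrees overlap. $G_3^0$: vertices $v_s,v_b$ joined by 3 internally disjoint three-vertex paths $v_s-x_i-v_b$, no other edges. The $G_d^u$-blocked graph $G''$ of $G$ (here $d=3,u=0$): let $G'=(V',E')$ be the disjoint union of six copies of $G$. The vertex set of $G''$ is $V_1\cup V_2\cup V_3\cup V_4$ (pairwise disjoint), where $V_1=V'$ (vertex-representatives), $V_2$ contains one new vertex for each edge of $E'$ (edge-representatives), $V_3=\{f(v): v\in V_1\}$ is a set of new vertices in bijection $f$ with $V_1$ (brothers), and $V_4$ is the vertex set of a copy of $G_d^u$. Edges of $G''$: $v\in V_1$ is adjacent to the edge-representative of $e\in E'$ iff $v$ is an endpoint of $e$; $V_2\cup V_3$ is a clique; each $v\in V_1$ is adjacent to $f(v)$; every vertex of $V_2\cup V_3$ is adjacent to $v_s$ and $v_b$; the edges of $G_d^u$; no other edges. *)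

(* Defs.v *)
From mathcomp Require Import all_boot.
Set Implicit Arguments. Unset Strict Implicit. Unset Printing Implicit Defensive.

Definition simple_graph (T : finType) (e : rel T) : Prop :=
  symmetric e /\ irreflexive e.

Definition restrict (T : finType) (e : rel T) (A : {set T}) : rel T :=
  [rel x y | [&& e x y, x \in A & y \in A]].

Definition k_connected (k : nat) (T : finType) (e : rel T) : Prop :=
  k < #|T| /\
  forall S : {set T}, #|S| < k ->
    forall x y, x \notin S -> y \notin S -> connect (restrict e (~: S)) x y.

Definition colourable (k : nat) (T : finType) (e : rel T) : Prop :=
  exists c : T -> 'I_k, forall x y, e x y -> c x != c y.

Definition connected_graph (T : finType) (e : rel T) : Prop :=
  forall x y, connect e x y.

Definition has_cycle (T : finType) (e : rel T) : Prop :=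
  exists (x : T) (p : seq T),
    [/\ 2 <= size p, uniq (x :: p), path e x p & e (last x p) x].

Definition is_tree (T : finType) (e : rel T) : Prop :=
  [/\ simple_graph e, connected_graph e & ~ has_cycle e].

Definition degree (T : finType) (e : rel T) (x : T) : nat := #|[set y | e x y]|.

Definition leaves (T : finType) (e : rel T) : {set T} :=
  [set x | degree e x == 1].

Definition subtree (T : finType) (e : rel T) (A : {set T}) : Prop :=
  A != set0 /\ forall x y, x \in A -> y \in A -> connect (restrict e A) x y.

Definition overlap (T : finType) (a b : {set T}) : bool :=
  [&& a :&: b != set0, a :\: b != set0 & b :\: a != set0].

Definition overlap_graph_of_subtrees_k_leaves (k : nat) (I : finType)
    (adj : rel I) : Prop :=
  exists (T : finType) (e : rel T) (S : I -> {set T}),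
    [/\ is_tree e, #|leaves e| = k,
        forall i, subtree e (S i)
      & forall i j, adj i j = overlap (S i) (S j)].

Section Blocked.
Variables (V : finType) (adj : rel V).

Definition is_edge (A : {set V}) : bool :=
  [exists x, exists y, adj x y && (A == [set x; y])].

Definition edgeT : finType := {A : {set V} | is_edge A}.

(* vertices of G_3^0 : inl true = v_s, inl false = v_b, inr i = x_i *)
Definition G30T : finType := (bool + 'I_3)%type.

(* V1 = vertex-representatives (copy index, vertex) of G' (six copies),
   V2 = edge-representatives (copy index, edge),
   V3 = brothers f(i,v), V4 = copy of G_3^0 *)
Definition blockedT : finType :=
  ((('I_6 * V) + ('I_6 * edgeT)) + (('I_6 * V) + G30T))%type.

Definition blocked_half (u w : blockedT) : bool :=
  match u, w with
  (* vertex-representative -- edge-representative of an incident edge *)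
  | inl (inl (i, v)), inl (inr (j, f)) => (i == j) && (v \in val f)
  (* V2 u V3 is a clique *)
  | inl (inr _), inl (inr _) => u != w
  | inl (inr _), inr (inl _) => true
  | inr (inl _), inr (inl _) => u != w
  (* v -- f(v) *)
  | inl (inl (i, v)), inr (inl (j, x)) => (i == j) && (v == x)
  (* V2 u V3 adjacent to v_s and v_b *)
  | inl (inr _), inr (inr (inl _)) => true
  | inr (inl _), inr (inr (inl _)) => true
  (* edges of G_3^0 : v_s - x_i and v_b - x_i *)
  | inr (inr (inl _)), inr (inr (inr _)) => true
  | _, _ => false
  end.

Definition blocked_adj : rel blockedT :=
  fun u w => blocked_half u w || blocked_half w u.

End Blocked.

(* Main.v *)
Require Import Defs.
From mathcomp Require Import all_boot.
From mathcomp Require Import zify.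
Set Implicit Arguments. Unset Strict Implicit. Unset Printing Implicit Defensive.

Definition o0 : 'I_3 := @Ordinal 3 0 isT.
Definition o1 : 'I_3 := @Ordinal 3 1 isT.
Definition o2 : 'I_3 := @Ordinal 3 2 isT.

Lemma ord3P (l : 'I_3) : l = o0 \/ l = o1 \/ l = o2.
Proof.
case: l => [[|[|[|m]]] H]; [left|right;left|right;right|by []]; exact: val_inj.
Qed.

Lemma overlapC (T : finType) (A B : {set T}) : overlap A B = overlap B A.
Proof. by rewrite /overlap setIC (andbC (A :\: B != set0)). Qed.

Lemma overlap_refl (T : finType) (A : {set T}) : overlap A A = false.
Proof. by rewrite /overlap setDv eqxx /= andbF. Qed.

Section Tree.
Variable n : nat.
Definition TT : finType := option ('I_3 * 'I_n.+1)%type.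
Definition ht (x : TT) : nat := if x is Some (_, j) then (nat_of_ord j).+1 else 0.
Definition par (x : TT) : TT :=
  if x is Some (l, j) then (if nat_of_ord j == 0 then None else Some (l, inord (nat_of_ord j).-1))
  else None.
Definition te : rel TT :=
  fun x y => ((x != None) && (y == par x)) || ((y != None) && (x == par y)).

Lemma ht_par x : x != None -> (ht (par x)).+1 = ht x.
Proof.
case: x => [[l j]|] //= _.
have [Hj|Hj] := eqVneq (nat_of_ord j) 0; first by rewrite Hj.
rewrite /ht inordK; first by lia.
have := ltn_ord j; lia.
Qed.

Lemma te_sym : symmetric te.
Proof. by move=> x y; rewrite /te orbC. Qed.

Lemma te_par x : x != None -> te x (par x).
Proof. by move=> H; rewrite /te H eqxx. Qed.

Lemma te_ht x y : te x y -> ht x = (ht y).+1 \/ ht y = (ht x).+1.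
Proof.
case/orP => /andP[H /eqP E]; subst; [left|right]; by rewrite ht_par.
Qed.

Lemma te_down x y : te x y -> ht y < ht x -> y = par x.
Proof.
case/orP => /andP[H /eqP E] //; subst x; move: (ht_par H); lia.
Qed.

Lemma te_irr : irreflexive te.
Proof. move=> x; apply/negP => /te_ht; lia. Qed.

Lemma conn_root x : connect te x None.
Proof.
move: {2}(ht x) (leqnn (ht x)) => k; elim: k x => [|k IH] x Hk.
  by case: x Hk => [[l j]|] //= _; exact: connect0.
have [->|Hx] := eqVneq x None; first exact: connect0.
apply: connect_trans (connect1 (te_par Hx)) (IH _ _).
move: (ht_par Hx); lia.
Qed.

Lemma tree_conn : connected_graph te.
Proof.
move=> x y; apply: connect_trans (conn_root x) _.
rewrite (sym_connect_sym te_sym); exact: conn_root.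
Qed.

Lemma seq_max (s : seq TT) x0 :
  exists2 m, m \in x0 :: s & forall z, z \in x0 :: s -> ht z <= ht m.
Proof.
elim: s x0 => [|y s IH] x0.
  by exists x0; rewrite ?inE // => z; rewrite inE => /eqP->.
have [m Hm Hmax] := IH y.
have [Hle|Hlt] := leqP (ht x0) (ht m).
  exists m; first by rewrite inE Hm orbT.
  by move=> z; rewrite inE => /orP[/eqP->|/Hmax].
exists x0; first by rewrite inE eqxx.
move=> z; rewrite inE => /orP[/eqP->//|/Hmax]; lia.
Qed.

Lemma tree_nocycle : ~ has_cycle te.
Proof.
move=> [x [p [Hsz Hu Hp He]]].
have Hc : cycle te (x :: p) by rewrite /cycle rcons_path Hp He.
have [m Hm Hmax] := seq_max p x.
have {Hsz} Hsz : 2 < size (x :: p) by [].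
case/splitPr: Hm Hc Hu Hsz Hmax => p1 p2.
rewrite -(rot_cycle (size p1)) -(rot_uniq (size p1)) => Hc Hu Hsz Hmax.
have Hsz' : 2 <= size (p2 ++ p1) by move: Hsz; rewrite !size_cat /=; lia.
rewrite rot_size_cat cat_cons in Hc Hu.
have Hmax' : forall z, z \in m :: p2 ++ p1 -> ht z <= ht m.
  move=> z Hz; apply: Hmax; rewrite -(mem_rot (size p1)) rot_size_cat; exact: Hz.
move: Hc Hu Hsz' Hmax'; rewrite /cycle; move: (p2 ++ p1) => s.
case: s => [|a [|a' q]] // Hc Hu _ Hmax'.
move: Hc; rewrite rcons_path /= => /andP[/andP[Hma Hp'] Hl].
have Hlow : forall z, te m z -> z \in m :: a :: a' :: q -> z = par m.
  move=> z Hz Hzin; apply: te_down (Hz) _.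
  have := Hmax' z Hzin; case: (te_ht Hz) => ->; lia.
have Ha_in : a \in [:: m, a, a' & q] by rewrite !inE eqxx orbT.
have E1 := Hlow a Hma Ha_in.
have Hl' : te m (last m [:: a, a' & q]) by rewrite te_sym.
have E2 := Hlow _ Hl' (mem_last m [:: a, a' & q]).
move: Hu; rewrite /= => /andP[_ /andP[Ha _]].
have : last a' q \in a' :: q by exact: mem_last.
move: E2 => /= E2; by rewrite E2 -E1 (negbTE Ha).
Qed.

Lemma tree_is_tree : is_tree te.
Proof. split; [split; [exact: te_sym|exact: te_irr]|exact: tree_conn|exact: tree_nocycle]. Qed.


Definition tip (l : 'I_3) : TT := Some (l, ord_max).

Lemma tip_inj : injective tip.
Proof. by move=> l l' [->]. Qed.

Lemma deg_ne1 x a b : a != b -> te x a -> te x b -> degree te x != 1.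
Proof.
move=> Hab Ha Hb; rewrite /degree.
have : [set a; b] \subset [set y | te x y].
  by apply/subsetP => y; rewrite !inE => /orP[]/eqP->; rewrite ?Ha ?Hb.
move/subset_leq_card; rewrite cards2 Hab; lia.
Qed.

Lemma deg_tip l : degree te (tip l) = 1.
Proof.
rewrite /degree -(cards1 (par (tip l))); congr (#| pred_of_set _ |); apply/setP => y.
rewrite !inE /te /=.
case: (y == _) => //=.
case: y => [[l' j']|] //=.
have [H|H] := eqVneq (nat_of_ord j') 0; first by [].
apply/negP => /eqP [_] /(congr1 (@nat_of_ord _)) /=.
rewrite inordK; have := ltn_ord j'; lia.
Qed.

Lemma leaves_te : leaves te = tip @: [set: 'I_3].
Proof.
apply/setP => x; rewrite /leaves inE.
case: x => [[l j]|].
  have [Hj|Hj] := eqVneq (nat_of_ord j) n.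
    have -> : j = ord_max by apply: val_inj.
    have := deg_tip l; rewrite /tip => ->; rewrite eqxx; symmetry; apply/imsetP; by exists l.
  have Hjn : nat_of_ord j < n by have := ltn_ord j; lia.
  rewrite (negbTE (deg_ne1 (a := par (Some (l, j))) (b := Some (l, inord j.+1)) _ _ _)).
  - symmetry; apply/negP => /imsetP [l' _ [_ E]].
    by move: Hj; rewrite E /= eqxx.
  - apply/eqP => /(congr1 ht); rewrite -/(ht (par (Some (l, j)))).
    have := ht_par (x := Some (l, j)) isT; rewrite /= inordK; lia.
  - by rewrite te_par.
  - apply/orP; right; rewrite /= /par inordK /=; last lia. by rewrite inord_val.
rewrite (negbTE (deg_ne1 (a := Some (o0, ord0)) (b := Some (o1, ord0)) _ _ _)) //.
by symmetry; apply/negP => /imsetP [l' _].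
Qed.

Lemma card_leaves : #|leaves te| = 3.
Proof. by rewrite leaves_te card_imset ?cardsT ?card_ord //; exact: tip_inj. Qed.

Lemma subtree_root (A : {set TT}) r : r \in A ->
  (forall x, x \in A -> x != r -> (x != None) && (par x \in A)) -> subtree te A.
Proof.
move=> Hr Hcl; split; first by apply/set0Pn; exists r.
have Hsym : symmetric (restrict te A).
  by move=> x y; rewrite /restrict /= te_sym (andbC (x \in A)).
have H : forall x, x \in A -> connect (restrict te A) x r.
  move=> x; move: {2}(ht x) (leqnn (ht x)) => k; elim: k x => [|k IH] x Hk Hx;
    (have [->|Hxr] := eqVneq x r; first exact: connect0);
    have /andP[Hn Hp] := Hcl x Hx Hxr.
    by move: (ht_par Hn); lia.
  apply: connect_trans (connect1 _) (IH (par x) _ Hp).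
    by rewrite /restrict /= te_par // Hx Hp.
  by move: (ht_par Hn); lia.
move=> x y Hx Hy; apply: connect_trans (H x Hx) _.
rewrite (sym_connect_sym Hsym); exact: H.
Qed.

Definition Kset (d : 'I_3 -> nat) : {set TT} :=
  [set x : TT | if x is Some (l, j) then nat_of_ord j < d l else true].
Definition Bset (l : 'I_3) (s : nat) : {set TT} :=
  [set x : TT | if x is Some (l', j) then (l' == l) && (s <= nat_of_ord j <= s.+1) else false].

Lemma Kset_sub d : subtree te (Kset d).
Proof.
apply: (subtree_root (r := None)); first by rewrite /Kset /Bset inE.
move=> [[l j]|] //; rewrite /Kset /Bset inE /= => Hj _; rewrite /par.
have [H|H] := eqVneq (nat_of_ord j) 0; first by rewrite /Kset /Bset inE.
rewrite /Kset /Bset inE inordK; have := ltn_ord j; lia.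
Qed.

Lemma Bset_sub l s : s.+1 <= n -> subtree te (Bset l s).
Proof.
move=> Hs; apply: (subtree_root (r := Some (l, inord s))).
  by rewrite /Kset /Bset inE /= eqxx inordK; lia.
move=> [[l' j]|]; rewrite /Kset /Bset inE /= => // /and3P[/eqP -> H1 H2] Hne.
have Hj' : nat_of_ord j = s.+1.
  have [E|E] := eqVneq (nat_of_ord j) s; last by lia.
  by move: Hne; rewrite (_ : j = inord s) ?eqxx //; apply: val_inj; rewrite /= inordK; lia.
rewrite /par Hj' /= inE eqxx /= inordK; lia.
Qed.

Lemma ovKK d d' : overlap (Kset d) (Kset d') =
  [exists l, (d' l < d l) && (d' l <= n)] && [exists l, (d l < d' l) && (d l <= n)].
Proof.
have I : Kset d :&: Kset d' != set0 by apply/set0Pn; exists None; rewrite /Kset /Bset !inE.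
have D : forall e e', (Kset e :\: Kset e' != set0) = [exists l, (e' l < e l) && (e' l <= n)].
  move=> e e'; apply/set0Pn/existsP => [[[[l j]|]]|[l /andP[H1 H2]]].
  - rewrite /Kset /Bset !inE /= => /andP[H1 H2]; exists l; have := ltn_ord j; lia.
  - by rewrite /Kset /Bset !inE.
  - by exists (Some (l, inord (e' l))); rewrite /Kset /Bset !inE /= inordK; lia.
by rewrite /overlap I !D.
Qed.

Lemma ovBK l s d : s.+1 <= n -> overlap (Bset l s) (Kset d) = (d l == s.+1).
Proof.
move=> Hs; rewrite /overlap.
have -> : (Kset d :\: Bset l s != set0) by apply/set0Pn; exists None; rewrite /Kset /Bset !inE.
have -> : (Bset l s :&: Kset d != set0) = (s < d l).
  apply/set0Pn/idP => [[[[l' j]|]]|H]; rewrite /Kset /Bset ?inE //=.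
    by move=> /andP[/and3P[/eqP E H1 H2] Hd]; subst; lia.
  by exists (Some (l, inord s)); rewrite /Kset /Bset !inE /= eqxx inordK; lia.
have -> : (Bset l s :\: Kset d != set0) = (d l <= s.+1).
  apply/set0Pn/idP => [[[[l' j]|]]|H]; rewrite /Kset /Bset ?inE //=.
    by move=> /andP[Hd /and3P[/eqP E H1 H2]]; subst; lia.
  by exists (Some (l, inord s.+1)); rewrite /Kset /Bset !inE /= eqxx inordK; lia.
by rewrite andbT eqn_leq andbC.
Qed.

Lemma ovKB l s d : s.+1 <= n -> overlap (Kset d) (Bset l s) = (d l == s.+1).
Proof. by move=> Hs; rewrite overlapC ovBK. Qed.

Lemma ovBB l l' p k k' : overlap (Bset l (p + 2 * k)) (Bset l' (p + 2 * k')) = false.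
Proof.
apply/negbTE/negP; rewrite /overlap => /and3P[/set0Pn[x Hx] H2 _].
move: Hx; rewrite /Kset /Bset !inE; case: x => [[l'' j]|] //=.
move=> /andP[/and3P[/eqP E1 H1 H1'] /and3P[/eqP E2 H3 H3']].
have Ek : k = k' by lia.
by subst; move: H2; rewrite setDv eqxx.
Qed.

End Tree.

Lemma ex3 (p : pred 'I_3) : [exists l, p l] = [|| p o0, p o1 | p o2].
Proof.
apply/existsP/idP => [[l]|].
  by case: (ord3P l) => [->|[->|->]] ->; rewrite ?orbT.
by case/or3P => H; [exists o0|exists o1|exists o2].
Qed.

Lemma all3 (P : 'I_3 -> Prop) : P o0 -> P o1 -> P o2 -> forall l, P l.
Proof. by move=> H0 H1 H2 l; case: (ord3P l) => [->|[->|->]]. Qed.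

Definition sum3 (d : 'I_3 -> nat) := d o0 + d o1 + d o2.

Lemma sum3_perm d (a b w : 'I_3) : a != b -> a != w -> b != w ->
  sum3 d = d a + d b + d w.
Proof.
rewrite /sum3.
by case: (ord3P a) => [->|[->|->]]; case: (ord3P b) => [->|[->|->]];
  case: (ord3P w) => [->|[->|->]] //= _ _ _; lia.
Qed.

Lemma third (a b : 'I_3) : exists w, (w != a) && (w != b).
Proof.
by case: (ord3P a) => [->|[->|->]]; case: (ord3P b) => [->|[->|->]];
  [exists o1|exists o2|exists o1|exists o2|exists o0|exists o0|exists o1|exists o0|exists o0].
Qed.

Lemma sum3_le d d' : sum3 d = sum3 d' -> (forall l, d l <= d' l) -> forall l, d l = d' l.
Proof.
rewrite /sum3 => S H; have := H o0; have := H o1; have := H o2.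
move=> h2 h1 h0 l; case: (ord3P l) => [->|[->|->]]; lia.
Qed.

Section Main.
Variables (V : finType) (adj : rel V) (c : V -> 'I_3).
Hypothesis Hc : forall x y, adj x y -> c x != c y.

Definition RR := #|{: 'I_6 * V}|.
Definition rk (r : 'I_6 * V) : nat := enum_rank r.
Definition PP := 4 * RR + 4.
Definition NN := PP + 2 * RR + 1.
Definition sb r := PP + 2 * rk r.
Definition bb r := (sb r).+1.

Lemma rk_lt r : rk r < RR.
Proof. exact: ltn_ord. Qed.

Lemma bb_inj r r' : bb r = bb r' -> r = r'.
Proof.
move=> H; apply: enum_rank_inj; apply: ord_inj; move: H; rewrite /bb /sb /rk; lia.
Qed.

Lemma bb_lo r : PP < bb r.
Proof. rewrite /bb /sb; lia. Qed.

Lemma bb_hi r : bb r < PP + 2 * RR.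
Proof. have := rk_lt r; rewrite /bb /sb; lia. Qed.

Definition dE (i : 'I_6) (f : {set V}) (l : 'I_3) : nat :=
  if [pick z in f | c z == l] is Some z then bb (i, z)
  else 3 * PP - \sum_(z in f) bb (i, z).
Definition oth (a : 'I_3) : 'I_3 := if a == o0 then o1 else o0.
Definition dB (r : 'I_6 * V) (l : 'I_3) : nat :=
  if l == c r.2 then bb r else if l == oth (c r.2) then PP else 2 * PP - bb r.
Definition dS (l : 'I_3) : nat := if l == o0 then NN.+1 else 0.
Definition dV (l : 'I_3) : nat := if l == o2 then 0 else NN.+1.
Definition dX (l : 'I_3) : nat := if l == o2 then 1 else 0.

Lemma oth_neq a : oth a != a.
Proof. by rewrite /oth; case: (ord3P a) => [->|[->|->]]. Qed.

Definition cq (d : 'I_3 -> nat) := (forall l, 0 < d l <= NN) /\ sum3 d = 3 * PP.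

Lemma ex_lt d d' : sum3 d = sum3 d' -> (exists l, d l != d' l) -> exists l, d' l < d l.
Proof.
move=> S [l Hl].
case: (boolP [exists l, d' l < d l]) => [/existsP//|/existsP Hn]; exfalso.
have H : forall l, d l <= d' l.
  by move=> l'; rewrite leqNgt; apply/negP => H'; apply: Hn; exists l'.
by move: Hl; rewrite (sum3_le S H l) eqxx.
Qed.

Lemma ovCC d d' : cq d -> cq d' ->
  overlap (Kset NN d) (Kset NN d') = ~~ [forall l, d l == d' l].
Proof.
move=> [B1 S1] [B2 S2]; rewrite ovKK.
case: (boolP [forall l, d l == d' l]) => [/forallP H|H] /=.
  apply/negbTE/nandP; left; apply/negP => /existsP [l /andP [H1 _]].
  by move/eqP: (H l); lia.
move/forallPn: H => [l Hl].
have [l1 H1] : exists l, d l < d' l.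
  apply: ex_lt; first by rewrite S1 S2.
  by exists l; rewrite eq_sym.
have [l2 H2] : exists l, d' l < d l.
  apply: ex_lt; first by rewrite S1 S2.
  by exists l.
apply/andP; split; apply/existsP.
  by exists l2; have := B2 l2; rewrite H2; lia.
by exists l1; have := B1 l1; rewrite H1; lia.
Qed.


Lemma ovC_S d : cq d -> overlap (Kset NN d) (Kset NN dS) = true.
Proof.
move=> [B _]; have := B o0; have := B o1; have := B o2.
rewrite ovKK !ex3 /dS /=; lia.
Qed.

Lemma ovC_V d : cq d -> overlap (Kset NN d) (Kset NN dV) = true.
Proof.
move=> [B _]; have := B o0; have := B o1; have := B o2.
rewrite ovKK !ex3 /dV /=; lia.
Qed.

Lemma ovC_X d : cq d -> overlap (Kset NN d) (Kset NN dX) = false.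
Proof.
move=> [B _]; have := B o0; have := B o1; have := B o2.
rewrite ovKK !ex3 /dX /=; lia.
Qed.

Lemma ov_SV : overlap (Kset NN dS) (Kset NN dV) = false.
Proof. rewrite ovKK !ex3 /dS /dV /=; lia. Qed.
Lemma ov_SX : overlap (Kset NN dS) (Kset NN dX) = true.
Proof. rewrite ovKK !ex3 /dS /dX /=; lia. Qed.
Lemma ov_VX : overlap (Kset NN dV) (Kset NN dX) = true.
Proof. rewrite ovKK !ex3 /dV /dX /=; lia. Qed.

Lemma sb_ok r : (sb r).+1 <= NN.
Proof. have := bb_hi r; rewrite /bb /NN; lia. Qed.

Lemma ovB_g r l (d : 'I_3 -> nat) : (forall l, d l <= 1 \/ d l = NN.+1) ->
  overlap (Bset NN l (sb r)) (Kset NN d) = false.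
Proof.
move=> H; rewrite ovBK ?sb_ok //; apply/negbTE/eqP => E.
have := H l; rewrite E; have := bb_lo r; have := bb_hi r; rewrite /bb /NN /PP; lia.
Qed.

Lemma gS l : dS l <= 1 \/ dS l = NN.+1.
Proof. by rewrite /dS; case: ifP; [right|left]. Qed.
Lemma gV l : dV l <= 1 \/ dV l = NN.+1.
Proof. by rewrite /dV; case: ifP; [left|right]. Qed.
Lemma gX l : dX l <= 1 \/ dX l = NN.+1.
Proof. by rewrite /dX; case: ifP; left. Qed.

Lemma dE_x i x y : c x != c y -> dE i [set x; y] (c x) = bb (i, x).
Proof.
move=> Hxy; rewrite /dE; case: pickP => [z /andP[]|H].
  rewrite !inE => /orP[]/eqP-> // /eqP E.
  by move: Hxy; rewrite E eqxx.
by move: (H x); rewrite /= !inE !eqxx ?orbT.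
Qed.

Lemma dE_y i x y : c x != c y -> dE i [set x; y] (c y) = bb (i, y).
Proof.
move=> Hxy; rewrite /dE; case: pickP => [z /andP[]|H].
  rewrite !inE => /orP[]/eqP-> // /eqP E.
  by move: Hxy; rewrite E eqxx.
by move: (H y); rewrite /= !inE !eqxx ?orbT.
Qed.

Lemma dE_o i x y l : c x != c y -> l != c x -> l != c y ->
  dE i [set x; y] l = 3 * PP - (bb (i, x) + bb (i, y)).
Proof.
move=> Hxy H1 H2; rewrite /dE; case: pickP => [z /andP[]|_].
  by rewrite !inE => /orP[]/eqP-> /eqP E; [move: H1|move: H2]; rewrite E eqxx.
have Hne : x != y by apply: contraNneq Hxy => ->.
rewrite big_setU1 ?big_set1 //= inE; exact: Hne.
Qed.

Lemma memE i i' x y z : c x != c y ->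
  (dE i [set x; y] (c z) == bb (i', z)) = (i == i') && (z \in [set x; y]).
Proof.
move=> Hxy.
have Hne : x != y by apply: contraNneq Hxy => ->.
have [->|Hzx] := eqVneq z x.
  rewrite dE_x // !inE eqxx andbT; apply/eqP/eqP => [/bb_inj [->]|->] //.
have [->|Hzy] := eqVneq z y.
  rewrite dE_y // !inE eqxx orbT andbT; apply/eqP/eqP => [/bb_inj [->]|->] //.
rewrite !inE (negbTE Hzx) (negbTE Hzy) andbF.
have [E|Ex] := eqVneq (c z) (c x).
  rewrite E dE_x //; apply/eqP => /bb_inj [_ E']; by move: Hzx; rewrite E' eqxx.
have [E|Ey] := eqVneq (c z) (c y).
  rewrite E dE_y //; apply/eqP => /bb_inj [_ E']; by move: Hzy; rewrite E' eqxx.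
rewrite dE_o //; apply/eqP => E.
have := bb_lo (i', z); have := bb_lo (i, x); have := bb_lo (i, y); lia.
Qed.

Lemma dB_c r : dB r (c r.2) = bb r.
Proof. by rewrite /dB eqxx. Qed.

Lemma dB_o r l : l != c r.2 -> dB r l <= PP.
Proof. by move=> H; rewrite /dB (negbTE H); have := bb_lo r; case: ifP => _ //; lia. Qed.

Lemma memB r i' z : (dB r (c z) == bb (i', z)) = (r == (i', z)).
Proof.
have [E|E] := eqVneq (c z) (c r.2).
  rewrite E dB_c; apply/eqP/eqP => [/bb_inj|->] //.
have := dB_o E; have := bb_lo (i', z) => H1 H2.
have -> : (dB r (c z) == bb (i', z)) = false by apply/negbTE/eqP; lia.
by symmetry; apply/negbTE; apply: contra_neq E => ->.
Qed.

Lemma edgeP (f : edgeT adj) : exists x y, c x != c y /\ val f = [set x; y].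
Proof.
have /existsP[x /existsP[y /andP[Ha /eqP E]]] := valP f.
by exists x, y; split => //; exact: Hc.
Qed.

Lemma cq_E i (f : edgeT adj) : cq (dE i (val f)).
Proof.
have [x [y [Hxy ->]]] := edgeP f.
have := bb_lo (i, x); have := bb_lo (i, y); have := bb_hi (i, x); have := bb_hi (i, y).
move=> h1 h2 h3 h4.
have [w /andP[Hw1 Hw2]] := third (c x) (c y).
split.
  move=> l; rewrite /NN.
  have [->|E1] := eqVneq l (c x); first by rewrite dE_x //; lia.
  have [->|E2] := eqVneq l (c y); first by rewrite dE_y //; lia.
  rewrite dE_o //; rewrite /PP in h1 h2 h3 h4 *; lia.
rewrite (sum3_perm _ Hxy (a := c x) (b := c y) (w := w)) ?(eq_sym (c x)) ?(eq_sym (c y)) //.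
rewrite dE_x // dE_y // dE_o //; rewrite /PP in h1 h2 h3 h4 *; lia.
Qed.

Lemma cq_B r : cq (dB r).
Proof.
have := bb_lo r; have := bb_hi r => h1 h2.
set a := c r.2.
have Hoa : oth a != a by exact: oth_neq.
have [w /andP[Hw1 Hw2]] := third a (oth a).
have Ho : dB r (oth a) = PP by rewrite /dB (negbTE Hoa) eqxx.
have Hw : dB r w = 2 * PP - bb r by rewrite /dB (negbTE Hw1) (negbTE Hw2).
split.
  move=> l; rewrite /NN.
  have [->|E1] := eqVneq l a; first by rewrite dB_c; lia.
  have [->|E2] := eqVneq l (oth a); first by rewrite Ho /PP; lia.
  have -> : l = w.
    by move: E1 E2 Hw1 Hw2 Hoa; case: (ord3P l) => [->|[->|->]];
       case: (ord3P w) => [->|[->|->]]; case: (ord3P a) => [->|[->|->]].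
  rewrite Hw; rewrite /PP in h1 h2 *; lia.
rewrite (sum3_perm _ (a := a) (b := oth a) (w := w)) ?(eq_sym a) ?(eq_sym (oth a)) //.
  rewrite dB_c Ho Hw; rewrite /PP in h1 h2 *; lia.
by rewrite eq_sym.
Qed.



Lemma memE' j (g : edgeT adj) i v :
  (dE j (val g) (c v) == bb (i, v)) = (j == i) && (v \in val g).
Proof. have [x [y [Hxy ->]]] := edgeP g; exact: memE. Qed.

Lemma ovBr r l d : overlap (Bset NN l (sb r)) (Kset NN d) = (d l == bb r).
Proof. by rewrite ovBK ?sb_ok. Qed.

Lemma dE_inj i i' (f f' : edgeT adj) :
  [forall l, dE i (val f) l == dE i' (val f') l] -> (i, f) = (i', f').
Proof.
move/forallP => H.
have [x [y [Hxy Ef]]] := edgeP f.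
have Hx : x \in val f by rewrite Ef !inE eqxx.
have := memE' i f i x; rewrite (eqP (H (c x))) memE' eqxx Hx /= => /andP[/eqP Ei _].
subst i'; congr pair; apply: val_inj; apply/setP => z.
by have := memE' i f i z; rewrite (eqP (H (c z))) memE' eqxx /= => ->.
Qed.

Lemma dB_inj r r' : [forall l, dB r l == dB r' l] -> r = r'.
Proof.
move/forallP; case: r' => i' z H.
by have := memB r i' z; rewrite (eqP (H (c z))) memB eqxx => /esym/eqP.
Qed.

Lemma dEB_ne i (f : edgeT adj) r : ~~ [forall l, dE i (val f) l == dB r l].
Proof.
have [x [y [Hxy ->]]] := edgeP f; apply/forallP => H.
have [E|E] := eqVneq (c x) (c r.2).
  have E2 : c y != c r.2 by rewrite -E eq_sym.
  have := H (c y); rewrite dE_y // => /eqP E'.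
  have := dB_o E2; have := bb_lo (i, y); lia.
have := H (c x); rewrite dE_x // => /eqP E'.
have := dB_o E; have := bb_lo (i, x); lia.
Qed.

Local Hint Resolve cq_E cq_B : core.

Definition SS (u : blockedT adj) : {set TT NN} :=
  match u with
  | inl (inl (i, v)) => Bset NN (c v) (sb (i, v))
  | inl (inr (i, f)) => Kset NN (dE i (val f))
  | inr (inl r) => Kset NN (dB r)
  | inr (inr (inl true)) => Kset NN dS
  | inr (inr (inl false)) => Kset NN dV
  | inr (inr (inr _)) => Kset NN dX
  end.

Lemma neq_or (T : eqType) (a b : T) : (a != b) || (b != a) = (a != b).
Proof. by rewrite eq_sym orbb. Qed.

Lemma main_ov (u w : blockedT adj) : blocked_adj u w = overlap (SS u) (SS w).
Proof.
case: u => [[[i v]|[i f]]|[[i v]|[[]|k]]];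
case: w => [[[j x]|[j g]]|[[j x]|[[]|k']]]; rewrite /blocked_adj /=.
all: try by rewrite overlap_refl.
- by rewrite /sb ovBB.
- by rewrite ovBr memE' orbF eq_sym.
- by rewrite ovBr memB xpair_eqE orbF (eq_sym j) (eq_sym x).
- by rewrite ovB_g //; exact: gS.
- by rewrite ovB_g //; exact: gV.
- by rewrite ovB_g //; exact: gX.
- by rewrite overlapC ovBr memE' eq_sym.
- rewrite (ovCC (cq_E _ _) (cq_E _ _)); case: (boolP [forall l, dE i (val f) l == dE j (val g) l]) => H /=.
    by case: (dE_inj H) => -> ->; rewrite !eqxx.
  apply/orP; left; apply/negP => /eqP [Ei Ef]; subst.
  by move/negP: H; apply; apply/forallP.
- by rewrite (ovCC (cq_E _ _) (cq_B _)) dEB_ne.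
- by rewrite (ovC_S (cq_E _ _)).
- by rewrite (ovC_V (cq_E _ _)).
- by rewrite (ovC_X (cq_E _ _)).
- by rewrite overlapC ovBr memB xpair_eqE (eq_sym j) (eq_sym x).
- by rewrite overlapC (ovCC (cq_E _ _) (cq_B _)) dEB_ne.
- rewrite (ovCC (cq_B _) (cq_B _)); case: (boolP [forall l, dB (i, v) l == dB (j, x) l]) => H /=.
    by case: (dB_inj H) => -> ->; rewrite !eqxx.
  apply/orP; left; apply/negP => /eqP [Ei Ef]; subst.
  by move/negP: H; apply; apply/forallP.
- by rewrite (ovC_S (cq_B _)).
- by rewrite (ovC_V (cq_B _)).
- by rewrite (ovC_X (cq_B _)).
- by rewrite overlapC ovB_g //; exact: gS.
- by rewrite overlapC (ovC_S (cq_E _ _)).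
- by rewrite overlapC (ovC_S (cq_B _)).
- by rewrite ov_SV.
- by rewrite ov_SX.
- by rewrite overlapC ovB_g //; exact: gV.
- by rewrite overlapC (ovC_V (cq_E _ _)).
- by rewrite overlapC (ovC_V (cq_B _)).
- by rewrite overlapC ov_SV.
- by rewrite ov_VX.
- by rewrite overlapC ovB_g //; exact: gX.
- by rewrite overlapC (ovC_X (cq_E _ _)).
- by rewrite overlapC (ovC_X (cq_B _)).
- by rewrite overlapC ov_SX.
- by rewrite overlapC ov_VX.
Qed.

End Main.

Theorem lemma5 (V : finType) (adj : rel V) :
  simple_graph adj ->
  k_connected 3 adj ->
  colourable 3 adj ->
  overlap_graph_of_subtrees_k_leaves 3 (@blocked_adj V adj).
Proof.
move=> _ _ [c Hc].
exists (TT (NN V)), (@te (NN V)), (@SS V adj c); split.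
- exact: tree_is_tree.
- exact: card_leaves.
- case => [[[i v]|[i f]]|[[i v]|[[]|k]]] /=; try exact: Kset_sub.
  by apply: Bset_sub; apply: sb_ok.
- exact: (main_ov Hc).
Qed.
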